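(* Let $n\in\mathbb{N}$, $y\in\{-1,+1\}^n$, $Y=\operatorname{diag}(y)$, let $K,\tilde K\in\mathbb{R}^{n\times n}$ be symmetric positive semidefinite matrices, $C>0$, $\gamma>0$, and define $F(\alpha)=\frac12\alpha^\top YKY\alpha-\mathbf 1^\top\alpha$ and $\tilde F(\tilde\alpha)=\frac12\tilde\alpha^\top\tilde K\tilde\alpha$. (i) If $(\alpha_1,\tilde\alpha_1)$ and $(\alpha_2,\tilde\alpha_2)$ are solutions of $$\min_{\alpha,\tilde\alpha\in\mathbb{R}^n}F(\alpha)+\tfrac1\gamma\tilde F(\tilde\alpha)\quad\text{s.t. } y^\top\alpha=0,\ \mathbf 1^\top\tilde\alpha=0,\ 0\le\alpha_i\le C+\tilde\alpha_i\ \forall i,$$ then $\alpha_1-\alpha_2\in\operatorname{Null}(YKY)\cap\mathbf 1^\perp\cap y^\perp$ and $\tilde\alpha_1-\tilde\alpha_2\in\operatorname{Null}(\tilde K)\cap\mathbf 1^\perp$. (ii) For $c\in\mathbb{R}^n_{\ge0}$, if $\alpha_1$ and $\alpha_2$ are solutions of $\min_\alpha F(\alpha)$ s.t. $y^\top\alpha=0$, $0\le\alpha_i\le c_i$ for all $i$, then $\alpha_1-\alpha_2\in\operatorname{Null}(YKY)\cap\mathbf 1^\perp\cap y^\perp$.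
   Context: $\mathbf 1$ is the all-ones vector; $v^\perp$ denotes the orthogonal complement of $v$ in $\mathbb{R}^n$. (These are the dual problems of SVM+ and of the weighted SVM, with $K$ and $\tilde K$ the kernel matrices of the decision and correcting features.) *)

(* Defs.v *)
From mathcomp Require Import all_boot all_order all_algebra.
Set Implicit Arguments. Unset Strict Implicit. Unset Printing Implicit Defensive.
Import Order.TTheory GRing.Theory Num.Theory.
Local Open Scope ring_scope.

Definition dotv (R : ringType) (n : nat) (u v : 'cV[R]_n) : R := (u^T *m v) 0 0.

Definition psd (R : numDomainType) (n : nat) (M : 'M[R]_n) : Prop :=
  M^T = M /\ forall v : 'cV[R]_n, 0 <= dotv v (M *m v).

Definition ones (R : ringType) (n : nat) : 'cV[R]_n := const_mx 1.

Definition diagY (R : ringType) (n : nat) (y : 'cV[R]_n) : 'M[R]_n := diag_mx y^T.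

Definition in_null (R : ringType) (n : nat) (M : 'M[R]_n) (v : 'cV[R]_n) : Prop :=
  M *m v = 0.

Definition in_perp (R : ringType) (n : nat) (u v : 'cV[R]_n) : Prop :=
  dotv u v = 0.

Definition Fobj (R : realFieldType) (n : nat) (y : 'cV[R]_n) (K : 'M[R]_n)
  (a : 'cV[R]_n) : R :=
  2^-1 * dotv a (diagY y *m K *m diagY y *m a) - dotv (ones R n) a.

Definition Ftobj (R : realFieldType) (n : nat) (Kt : 'M[R]_n) (at_ : 'cV[R]_n) : R :=
  2^-1 * dotv at_ (Kt *m at_).

Definition feas_plus (R : realFieldType) (n : nat) (y : 'cV[R]_n) (C : R)
  (a at_ : 'cV[R]_n) : Prop :=
  dotv y a = 0 /\ dotv (ones R n) at_ = 0 /\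
  forall i, 0 <= a i 0 /\ a i 0 <= C + at_ i 0.

Definition sol_plus (R : realFieldType) (n : nat) (y : 'cV[R]_n) (K Kt : 'M[R]_n)
  (C gamma : R) (a at_ : 'cV[R]_n) : Prop :=
  feas_plus y C a at_ /\
  forall b bt, feas_plus y C b bt ->
    Fobj y K a + gamma^-1 * Ftobj Kt at_ <= Fobj y K b + gamma^-1 * Ftobj Kt bt.

Definition feas_w (R : realFieldType) (n : nat) (y c a : 'cV[R]_n) : Prop :=
  dotv y a = 0 /\ forall i, 0 <= a i 0 /\ a i 0 <= c i 0.

Definition sol_w (R : realFieldType) (n : nat) (y : 'cV[R]_n) (K : 'M[R]_n)
  (c a : 'cV[R]_n) : Prop :=
  feas_w y c a /\ forall b, feas_w y c b -> Fobj y K a <= Fobj y K b.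

(* Main.v *)
Require Import Defs.
From mathcomp Require Import all_boot all_order all_algebra.
From mathcomp Require Import ring lra.
Import Order.TTheory GRing.Theory Num.Theory.
Local Open Scope ring_scope.

Set Implicit Arguments. Unset Strict Implicit.
Section Aux.
Variable (R : realFieldType) (n : nat).
Implicit Types (u v w : 'cV[R]_n) (M : 'M[R]_n).

Lemma dotvDl u v w : dotv (u + v) w = dotv u w + dotv v w.
Proof. by rewrite /dotv linearD /= mulmxDl mxE. Qed.
Lemma dotvDr u v w : dotv u (v + w) = dotv u v + dotv u w.
Proof. by rewrite /dotv mulmxDr mxE. Qed.
Lemma dotvZl (a : R) u v : dotv (a *: u) v = a * dotv u v.
Proof. by rewrite /dotv linearZ /= -scalemxAl mxE. Qed.
Lemma dotvZr (a : R) u v : dotv u (a *: v) = a * dotv u v.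
Proof. by rewrite /dotv -scalemxAr mxE. Qed.
Lemma dotvNl u v : dotv (- u) v = - dotv u v.
Proof. by rewrite -scaleN1r dotvZl mulN1r. Qed.
Lemma dotvNr u v : dotv u (- v) = - dotv u v.
Proof. by rewrite -scaleN1r dotvZr mulN1r. Qed.
Lemma dotvC u v : dotv u v = dotv v u.
Proof. by rewrite /dotv -(trmxK (u^T *m v)) trmx_mul trmxK mxE. Qed.
Lemma dotvM u M v : M^T = M -> dotv u (M *m v) = dotv (M *m u) v.
Proof. by move=> HM; rewrite /dotv mulmxA -{1}HM -trmx_mul. Qed.
Lemma dotv0l v : dotv 0 v = 0.
Proof. by rewrite /dotv trmx0 mul0mx mxE. Qed.

Lemma dotv_sq u : dotv u u = \sum_i u i 0 ^+ 2.
Proof. by rewrite /dotv mxE; apply: eq_bigr => i _; rewrite mxE expr2. Qed.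

Lemma dotv_eq0 u : dotv u u = 0 -> u = 0.
Proof.
rewrite dotv_sq => /psumr_eq0P H; apply/matrixP => i j.
rewrite (ord1 j) mxE; apply/eqP; rewrite -sqrf_eq0; apply/eqP.
by apply: H => // k _; apply: sqr_ge0.
Qed.

Lemma psd_null M d : M^T = M -> (forall v, 0 <= dotv v (M *m v)) ->
  dotv d (M *m d) = 0 -> M *m d = 0.
Proof.
move=> HM Hp H0.
have Hdw : dotv d (M *m (M *m d)) = dotv (M *m d) (M *m d) by rewrite dotvM.
set w := M *m d in Hdw *.
have key : forall t : R, 0 <= 2 * t * dotv w w + t ^+ 2 * dotv w (M *m w).
  move=> t; have := Hp (d + t *: w).
  rewrite mulmxDr -scalemxAr !dotvDl !dotvDr !dotvZl !dotvZr H0 Hdw.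
  rewrite -/w; lra.
have b0 : 0 <= dotv w w by rewrite dotv_sq sumr_ge0 // => i _; apply: sqr_ge0.
have a0 : 0 <= dotv w (M *m w) by apply: Hp.
apply: dotv_eq0.
set a := dotv w (M *m w) in key a0; set b := dotv w w in key b0 *.
set t := - b / (a + 1).
have ht : t * a + t = - b.
  have ha : a + 1 != 0 by apply: lt0r_neq0; lra.
  by rewrite /t; field.
have := key t; nra.
Qed.

Definition Qf M (l x : 'cV[R]_n) := 2^-1 * dotv x (M *m x) - dotv l x.

Lemma Qf_mid M l a1 a2 : M^T = M ->
  Qf M l (2^-1 *: (a1 + a2)) =
  2^-1 * (Qf M l a1 + Qf M l a2) - 8^-1 * dotv (a1 - a2) (M *m (a1 - a2)).
Proof.
move=> HM.
have hc : dotv a2 (M *m a1) = dotv a1 (M *m a2) by rewrite dotvM // dotvC.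
rewrite /Qf -!scalemxAr !mulmxDr !mulmxN !dotvDl !dotvDr !dotvNl !dotvNr
  !dotvZl !dotvZr hc.
rewrite (dotvDl a1 a2) (dotvDr a1) (dotvDr a2) hc.
rewrite (dotvDr l); lra.
Qed.

Lemma Qf_shift M l a1 a2 : M^T = M -> M *m (a1 - a2) = 0 ->
  Qf M l a1 = Qf M l a2 - dotv l (a1 - a2).
Proof.
move=> HM H.
have Ma : M *m a1 = M *m a2 by apply/eqP; rewrite -subr_eq0 -mulmxBr H.
have e : dotv a1 (M *m a2) = dotv a2 (M *m a2) by rewrite dotvM // Ma dotvC.
rewrite /Qf Ma e (dotvDr l) (dotvNr l); ring.
Qed.

End Aux.

Theorem proposition3 (R : realFieldType) (n : nat) (y : 'cV[R]_n)
  (K Kt : 'M[R]_n) (C gamma : R) :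
  (forall i, y i 0 = 1 \/ y i 0 = -1) ->
  psd K -> psd Kt -> 0 < C -> 0 < gamma ->
  (forall a1 at1 a2 at2,
      sol_plus y K Kt C gamma a1 at1 -> sol_plus y K Kt C gamma a2 at2 ->
      (in_null (diagY y *m K *m diagY y) (a1 - a2) /\
       in_perp (ones R n) (a1 - a2) /\ in_perp y (a1 - a2)) /\
      (in_null Kt (at1 - at2) /\ in_perp (ones R n) (at1 - at2))) /\
  (forall c : 'cV[R]_n, (forall i, 0 <= c i 0) ->
    forall a1 a2, sol_w y K c a1 -> sol_w y K c a2 ->
      in_null (diagY y *m K *m diagY y) (a1 - a2) /\
      in_perp (ones R n) (a1 - a2) /\ in_perp y (a1 - a2)).
Proof.
move=> _ [KT Kp] [KtT Ktp] C0 g0.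
set Y := diagY y.
set M := Y *m K *m Y.
have YT : Y^T = Y by rewrite /Y /diagY tr_diag_mx.
have MT : M^T = M by rewrite /M !trmx_mul YT KT mulmxA.
have Mp : forall v, 0 <= dotv v (M *m v).
  move=> v; rewrite /M -!mulmxA dotvM // mulmxA; exact: Kp.
have FQ : forall a, Fobj y K a = Qf M (ones R n) a by [].
have FtQ : forall a, Ftobj Kt a = Qf Kt 0 a by move=> a; rewrite /Qf dotv0l subr0.
have perp : forall (u a1 a2 : 'cV[R]_n), dotv u a1 = 0 -> dotv u a2 = 0 ->
    in_perp u (a1 - a2).
  by move=> u b1 b2 h1 h2; rewrite /in_perp dotvDr dotvNr h1 h2 subr0.
split.
- move=> a1 at1 a2 at2 [F1 O1] [F2 O2].
  have E : Fobj y K a1 + gamma^-1 * Ftobj Kt at1 =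
           Fobj y K a2 + gamma^-1 * Ftobj Kt at2.
    by apply: le_anti; rewrite O1 // O2.
  have Fm : feas_plus y C (2^-1 *: (a1 + a2)) (2^-1 *: (at1 + at2)).
    case: F1 => [y1 [o1 b1]]; case: F2 => [y2 [o2 b2]].
    split; first by rewrite dotvZr dotvDr y1 y2 addr0 mulr0.
    split; first by rewrite dotvZr dotvDr o1 o2 addr0 mulr0.
    move=> i; rewrite !mxE; have := b1 i; have := b2 i; lra.
  have := O1 _ _ Fm.
  rewrite !FQ !FtQ !Qf_mid // -!FQ -!FtQ.
  have dM0 := Mp (a1 - a2).
  have dK0 := Ktp (at1 - at2).
  set dM := dotv (a1 - a2) (M *m (a1 - a2)) in dM0 *.
  set dK := dotv (at1 - at2) (Kt *m (at1 - at2)) in dK0 *.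
  have gi : 0 < gamma^-1 by rewrite invr_gt0.
  have hgi : 0 <= gamma^-1 * dK by rewrite mulr_ge0 // ltW.
  move=> H.
  have hM : dM = 0 by nra.
  have hK : dK = 0.
    have : gamma^-1 * dK = 0 by nra.
    by move/eqP; rewrite mulf_eq0 invr_eq0 gt_eqF //= => /eqP.
  have nM := psd_null MT Mp hM.
  have nK := psd_null KtT Ktp hK.
  move: E; rewrite !FQ !FtQ (Qf_shift _ MT nM) (Qf_shift _ KtT nK) dotv0l subr0 => E.
  case: F1 => [y1 [o1 _]]; case: F2 => [y2 [o2 _]].
  split; last by split; [exact: nK | exact: perp].
  split; first exact: nM.
  by split; [rewrite /in_perp; lra | exact: perp].
- move=> c _ a1 a2 [F1 O1] [F2 O2].
  have E : Fobj y K a1 = Fobj y K a2 by apply: le_anti; rewrite O1 // O2.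
  have Fm : feas_w y c (2^-1 *: (a1 + a2)).
    case: F1 => [y1 b1]; case: F2 => [y2 b2].
    split; first by rewrite dotvZr dotvDr y1 y2 addr0 mulr0.
    move=> i; rewrite !mxE; have := b1 i; have := b2 i; lra.
  have := O1 _ Fm.
  rewrite !FQ !Qf_mid // -!FQ.
  have dM0 := Mp (a1 - a2).
  set dM := dotv (a1 - a2) (M *m (a1 - a2)) in dM0 *.
  move=> H.
  have hM : dM = 0 by lra.
  have nM := psd_null MT Mp hM.
  move: E; rewrite !FQ (Qf_shift _ MT nM) => E.
  case: F1 => [y1 _]; case: F2 => [y2 _].
  split; first exact: nM.
  by split; [rewrite /in_perp; lra | exact: perp].
Qed.
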